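(* For every command $c$ and store $\sigma$ of the While-language: $(c,\sigma)\to^\infty$ if and only if $(c,\sigma)\Rightarrow^\infty$.
   Context: While-language syntax: variables $x$ range over a countably infinite set $\mathit{Var}$; $n$ ranges over natural numbers; values are $v ::= \mathsf{null}\mid n$ ($\mathsf{null}$ distinct from every natural number); expressions are $e ::= v\mid x\mid e_1\oplus e_2$ with $\oplus\in\{+,-,*\}$, where $\oplus(n_1,n_2)$ is the result of the operation on naturals; commands are $c ::= \mathsf{skip}\mid\mathsf{alloc}\ x\mid x:=e\mid c_1;c_2\mid \mathsf{if}\ e\ c_1\ c_2\mid\mathsf{while}\ e\ c$. A store $\sigma$ is a finite partial map from $\mathit{Var}$ to values, with domain $\mathrm{dom}(\sigma)$, lookup $\sigma(x)$, update $\sigma[x\mapsto v]$. Expression evaluation $(e,\sigma)\Rightarrow_E v$ is the least relation with: $(v,\sigma)\Rightarrow_E v$; $(x,\sigma)\Rightarrow_E\sigma(x)$ if $x\in\mathrm{dom}(\sigma)$; if $(e_1,\sigma)\Rightarrow_E n_1$ and $(e_2,\sigma)\Rightarrow_E n_2$ with $n_1,n_2$ naturals then $(e_1\oplus e_2,\sigma)\Rightarrow_E\oplus(n_1,n_2)$. Small-step relation $(c,\sigma)\to(c',\sigma')$ is the least relation with: $(\mathsf{alloc}\ x,\sigma)\to(\mathsf{skip},\sigma[x\mapsto\mathsf{null}])$ if $x\notin\mathrm{dom}(\sigma)$; $(x:=e,\sigma)\to(\mathsf{skip},\sigma[x\mapsto v])$ if $x\in\mathrm{dom}(\sigma)$ and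 $(e,\sigma)\Rightarrow_E v$; $(c_1;c_2,\sigma)\to(c_1';c_2,\sigma')$ if $(c_1,\sigma)\to(c_1',\sigma')$; $(\mathsf{skip};c_2,\sigma)\to(c_2,\sigma)$; $(\mathsf{if}\ e\ c_1\ c_2,\sigma)\to(c_1,\sigma)$ if $(e,\sigma)\Rightarrow_E v$, $v\neq 0$; $(\mathsf{if}\ e\ c_1\ c_2,\sigma)\to(c_2,\sigma)$ if $(e,\sigma)\Rightarrow_E 0$; $(\mathsf{while}\ e\ c,\sigma)\to(c;\mathsf{while}\ e\ c,\sigma)$ if $(e,\sigma)\Rightarrow_E v$, $v\neq0$; $(\mathsf{while}\ e\ c,\sigma)\to(\mathsf{skip},\sigma)$ if $(e,\sigma)\Rightarrow_E 0$. The predicate $(c,\sigma)\to^\infty$ is coinductively defined (greatest predicate) by the single rule: if $(c,\sigma)\to(c',\sigma')$ and $(c',\sigma')\to^\infty$ then $(c,\sigma)\to^\infty$; i.e. it holds exactly when there is an infinite sequence of transitions from $(c,\sigma)$. Big-step relation $(c,\sigma)\Rightarrow_B\sigma'$ is the least relation with: $(\mathsf{skip},\sigma)\Rightarrow_B\sigma$; $(\mathsf{alloc}\ x,\sigma)\Rightarrow_B\sigma[x\mapsto\mathsf{null}]$ if $x\notin\mathrm{dom}(\sigma)$; $(x:=e,\sigma)\Rightarrow_B\sigma[x\mapsto v]$ if $x\in\mathrm{dom}(\sigma)$ and $(e,\sigma)\Rightarrow_E v$; $(c_1;c_2,\sigma)\Rightarrow_B\sigma''$ if $(c_1,\sigma)\Rightarrow_B\sigma'$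 and $(c_2,\sigma')\Rightarrow_B\sigma''$; $(\mathsf{if}\ e\ c_1\ c_2,\sigma)\Rightarrow_B\sigma'$ if $(e,\sigma)\Rightarrow_E v$, $v\ne0$, $(c_1,\sigma)\Rightarrow_B\sigma'$; $(\mathsf{if}\ e\ c_1\ c_2,\sigma)\Rightarrow_B\sigma'$ if $(e,\sigma)\Rightarrow_E0$, $(c_2,\sigma)\Rightarrow_B\sigma'$; $(\mathsf{while}\ e\ c,\sigma)\Rightarrow_B\sigma''$ if $(e,\sigma)\Rightarrow_E v$, $v\ne0$, $(c,\sigma)\Rightarrow_B\sigma'$, $(\mathsf{while}\ e\ c,\sigma')\Rightarrow_B\sigma''$; $(\mathsf{while}\ e\ c,\sigma)\Rightarrow_B\sigma$ if $(e,\sigma)\Rightarrow_E0$. The big-step divergence predicate $(c,\sigma)\Rightarrow^\infty$ is the greatest predicate such that every element is the conclusion of an instance of one of these rules whose $\Rightarrow^\infty$-premises are in it: (D-Seq1) $(c_1,\sigma)\Rightarrow^\infty$ gives $(c_1;c_2,\sigma)\Rightarrow^\infty$; (D-Seq2) $(c_1,\sigma)\Rightarrow_B\sigma'$ and $(c_2,\sigma')\Rightarrow^\infty$ give $(c_1;c_2,\sigma)\Rightarrow^\infty$; (D-If) $(e,\sigma)\Rightarrow_E v$, $v\ne0$, $(c_1,\sigma)\Rightarrow^\infty$ give $(\mathsf{if}\ e\ c_1\ c_2,\sigma)\Rightarrow^\infty$; (D-IfZ) $(e,\sigma)\Rightarrow_E0$, $(c_2,\sigma)\Rightarrow^\infty$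 give $(\mathsf{if}\ e\ c_1\ c_2,\sigma)\Rightarrow^\infty$; (D-WhileBody) $(e,\sigma)\Rightarrow_E v$, $v\ne0$, $(c,\sigma)\Rightarrow^\infty$ give $(\mathsf{while}\ e\ c,\sigma)\Rightarrow^\infty$; (D-While) $(e,\sigma)\Rightarrow_E v$, $v\ne0$, $(c,\sigma)\Rightarrow_B\sigma'$, $(\mathsf{while}\ e\ c,\sigma')\Rightarrow^\infty$ give $(\mathsf{while}\ e\ c,\sigma)\Rightarrow^\infty$. *)

(* Defs.v *)
From Stdlib Require Import Arith List.
Import ListNotations.

Definition var := nat.

Inductive val : Type := Vnull | Vnat (n : nat).

Inductive binop : Type := Oplus | Ominus | Omult.

Definition eval_op (o : binop) (n1 n2 : nat) : nat :=
  match o with Oplus => n1 + n2 | Ominus => n1 - n2 | Omult => n1 * n2 end.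

Inductive expr : Type :=
| Eval (v : val)
| Evar (x : var)
| Eop (o : binop) (e1 e2 : expr).

Inductive cmd : Type :=
| Cskip
| Calloc (x : var)
| Cassign (x : var) (e : expr)
| Cseq (c1 c2 : cmd)
| Cif (e : expr) (c1 c2 : cmd)
| Cwhile (e : expr) (c : cmd).

(* A store is a finite partial map, represented by an association list;
   lookup returns the most recent binding. *)
Definition store := list (var * val).

Fixpoint lookup (s : store) (x : var) : option val :=
  match s with
  | [] => None
  | (y, v) :: s' => if Nat.eqb x y then Some v else lookup s' x
  end.

Definition in_dom (s : store) (x : var) : Prop := lookup s x <> None.

Definition update (s : store) (x : var) (v : val) : store := (x, v) :: s.

Inductive eval_expr : expr -> store -> val -> Prop :=
| E_Val : forall v s, eval_expr (Eval v) s v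
| E_Var : forall x s v, lookup s x = Some v -> eval_expr (Evar x) s v
| E_Op : forall o e1 e2 s n1 n2,
    eval_expr e1 s (Vnat n1) -> eval_expr e2 s (Vnat n2) ->
    eval_expr (Eop o e1 e2) s (Vnat (eval_op o n1 n2)).

Inductive step : cmd -> store -> cmd -> store -> Prop :=
| S_Alloc : forall x s, ~ in_dom s x ->
    step (Calloc x) s Cskip (update s x Vnull)
| S_Assign : forall x e s v, in_dom s x -> eval_expr e s v ->
    step (Cassign x e) s Cskip (update s x v)
| S_Seq : forall c1 c1' c2 s s', step c1 s c1' s' ->
    step (Cseq c1 c2) s (Cseq c1' c2) s'
| S_SeqSkip : forall c2 s, step (Cseq Cskip c2) s c2 s
| S_IfT : forall e c1 c2 s v, eval_expr e s v -> v <> Vnat 0 ->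
    step (Cif e c1 c2) s c1 s
| S_IfF : forall e c1 c2 s, eval_expr e s (Vnat 0) ->
    step (Cif e c1 c2) s c2 s
| S_WhileT : forall e c s v, eval_expr e s v -> v <> Vnat 0 ->
    step (Cwhile e c) s (Cseq c (Cwhile e c)) s
| S_WhileF : forall e c s, eval_expr e s (Vnat 0) ->
    step (Cwhile e c) s Cskip s.

CoInductive diverges : cmd -> store -> Prop :=
| Div_step : forall c s c' s', step c s c' s' -> diverges c' s' -> diverges c s.

Inductive bigstep : cmd -> store -> store -> Prop :=
| B_Skip : forall s, bigstep Cskip s s
| B_Alloc : forall x s, ~ in_dom s x -> bigstep (Calloc x) s (update s x Vnull)
| B_Assign : forall x e s v, in_dom s x -> eval_expr e s v ->
    bigstep (Cassign x e) s (update s x v)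
| B_Seq : forall c1 c2 s s' s'', bigstep c1 s s' -> bigstep c2 s' s'' ->
    bigstep (Cseq c1 c2) s s''
| B_IfT : forall e c1 c2 s s' v, eval_expr e s v -> v <> Vnat 0 ->
    bigstep c1 s s' -> bigstep (Cif e c1 c2) s s'
| B_IfF : forall e c1 c2 s s', eval_expr e s (Vnat 0) ->
    bigstep c2 s s' -> bigstep (Cif e c1 c2) s s'
| B_WhileT : forall e c s s' s'' v, eval_expr e s v -> v <> Vnat 0 ->
    bigstep c s s' -> bigstep (Cwhile e c) s' s'' -> bigstep (Cwhile e c) s s''
| B_WhileF : forall e c s, eval_expr e s (Vnat 0) -> bigstep (Cwhile e c) s s.

CoInductive bigdiv : cmd -> store -> Prop :=
| D_Seq1 : forall c1 c2 s, bigdiv c1 s -> bigdiv (Cseq c1 c2) s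
| D_Seq2 : forall c1 c2 s s', bigstep c1 s s' -> bigdiv c2 s' -> bigdiv (Cseq c1 c2) s
| D_If : forall e c1 c2 s v, eval_expr e s v -> v <> Vnat 0 ->
    bigdiv c1 s -> bigdiv (Cif e c1 c2) s
| D_IfZ : forall e c1 c2 s, eval_expr e s (Vnat 0) ->
    bigdiv c2 s -> bigdiv (Cif e c1 c2) s
| D_WhileBody : forall e c s v, eval_expr e s v -> v <> Vnat 0 ->
    bigdiv c s -> bigdiv (Cwhile e c) s
| D_While : forall e c s s' v, eval_expr e s v -> v <> Vnat 0 ->
    bigstep c s s' -> bigdiv (Cwhile e c) s' -> bigdiv (Cwhile e c) s.

(* Main.v *)
Require Import Defs.
From Stdlib Require Import Classical.

Inductive star : cmd -> store -> cmd -> store -> Prop :=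
| star_refl : forall c s, star c s c s
| star_step : forall c s c' s' c'' s'', step c s c' s' -> star c' s' c'' s'' -> star c s c'' s''.

Lemma step_big : forall c s c' s', step c s c' s' -> forall s'', bigstep c' s' s'' -> bigstep c s s''.
Proof.
  intros c s c' s' H; induction H; intros s'' Hb.
  - inversion Hb; subst. constructor; auto.
  - inversion Hb; subst. econstructor; eauto.
  - inversion Hb; subst. econstructor; eauto.
  - econstructor; eauto. constructor.
  - eapply B_IfT; eauto.
  - eapply B_IfF; eauto.
  - inversion Hb; subst. eapply B_WhileT; eauto.
  - inversion Hb; subst. eapply B_WhileF; eauto.
Qed.

Lemma star_big : forall c s s', star c s Cskip s' -> bigstep c s s'.
Proof.
  intros c s s' H. remember Cskip as k. induction H; subst.
  - constructor.
  - eapply step_big; eauto.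
Qed.

Lemma seq_div_aux : forall c1 c2 s, diverges (Cseq c1 c2) s ->
  ~ (exists s', star c1 s Cskip s' /\ diverges c2 s') -> diverges c1 s.
Proof.
  cofix CH. intros c1 c2 s Hd Hn.
  inversion Hd; subst. inversion H; subst.
  - eapply Div_step; [eassumption|]. eapply CH; [eassumption|].
    intros [s'' [Hs Hd2]]. apply Hn. exists s''. split; auto. econstructor; eauto.
  - exfalso. apply Hn. exists s'. split; auto. constructor.
Qed.

Lemma seq_div : forall c1 c2 s, diverges (Cseq c1 c2) s ->
  diverges c1 s \/ exists s', bigstep c1 s s' /\ diverges c2 s'.
Proof.
  intros c1 c2 s Hd.
  destruct (classic (exists s', star c1 s Cskip s' /\ diverges c2 s')) as [[s' [H1 H2]]|Hn].
  - right. exists s'. split; auto. apply star_big; auto.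
  - left. eapply seq_div_aux; eauto.
Qed.

Lemma skip_nodiv : forall s, ~ diverges Cskip s.
Proof. intros s H. inversion H; subst. inversion H0. Qed.

Lemma small_big : forall c s, diverges c s -> bigdiv c s.
Proof.
  cofix CH. intros c s Hd. destruct c.
  - exfalso; eapply skip_nodiv; eauto.
  - exfalso. inversion Hd; subst. inversion H; subst. eapply skip_nodiv; eauto.
  - exfalso. inversion Hd; subst. inversion H; subst. eapply skip_nodiv; eauto.
  - destruct (seq_div _ _ _ Hd) as [H|[s2 [H1 H2]]].
    + apply D_Seq1. apply CH; auto.
    + eapply D_Seq2; [eassumption|]. apply CH; auto.
  - inversion Hd; subst. inversion H; subst.
    + eapply D_If; eauto.
    + eapply D_IfZ; eauto.
  - inversion Hd; subst. inversion H; subst.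
    + destruct (seq_div _ _ _ H0) as [H1|[s2 [H1 H2]]].
      * eapply D_WhileBody; eauto.
      * eapply D_While; eauto.
    + exfalso; eapply skip_nodiv; eauto.
Qed.

Lemma cmd_eq_skip : forall c, {c = Cskip} + {c <> Cskip}.
Proof. destruct c; (left; reflexivity) || (right; discriminate). Qed.

Lemma big_one_step : forall c s s', bigstep c s s' -> c <> Cskip ->
  exists c1 s1, step c s c1 s1 /\ bigstep c1 s1 s'.
Proof.
  intros c s s' H; induction H; intros Hne.
  - congruence.
  - do 2 eexists; split; [constructor; auto| constructor].
  - do 2 eexists; split; [econstructor; eauto| constructor].
  - destruct (cmd_eq_skip c1) as [E|E].
    + subst. inversion H; subst. do 2 eexists; split; [apply S_SeqSkip|exact H0].
    + destruct (IHbigstep1 E) as [c1' [s1 [Hs Hb]]].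
      do 2 eexists; split; [econstructor; eauto| econstructor; eauto].
  - do 2 eexists; split; [eapply S_IfT; eauto| eauto].
  - do 2 eexists; split; [eapply S_IfF; eauto| eauto].
  - do 2 eexists; split; [eapply S_WhileT; eauto| econstructor; eauto].
  - do 2 eexists; split; [eapply S_WhileF; eauto| constructor].
Qed.

Lemma bigdiv_step : forall c s, bigdiv c s -> exists c' s', step c s c' s' /\ bigdiv c' s'.
Proof.
  intros c s H. revert s H. induction c; intros s H; inversion H; subst.
  - match goal with Hc : bigdiv c1 s |- _ => destruct (IHc1 _ Hc) as [c' [s' [Hs Hb]]] end.
    do 2 eexists; split; [econstructor; eauto| apply D_Seq1; auto].
  - destruct (cmd_eq_skip c1) as [E|E].
    + subst. match goal with Hb : bigstep Cskip _ _ |- _ => inversion Hb; subst end.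
      do 2 eexists; split; [apply S_SeqSkip|eauto].
    + match goal with Hb : bigstep c1 _ _ |- _ => rename Hb into H3 end.
      destruct (big_one_step _ _ _ H3 E) as [c1' [s1 [Hs Hb]]].
      do 2 eexists; split; [econstructor; eauto| eapply D_Seq2; eauto].
  - do 2 eexists; split; [eapply S_IfT; eauto| eauto].
  - do 2 eexists; split; [eapply S_IfF; eauto| eauto].
  - do 2 eexists; split; [eapply S_WhileT; eauto| apply D_Seq1; eauto].
  - do 2 eexists; split; [eapply S_WhileT; eauto| eapply D_Seq2; eauto].
Qed.

Lemma big_small : forall c s, bigdiv c s -> diverges c s.
Proof.
  cofix CH. intros c s H.
  destruct (bigdiv_step _ _ H) as [c' [s' [Hs Hb]]].
  eapply Div_step; [eassumption|]. apply CH; auto.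
Qed.

Theorem theorem5 : forall (c : cmd) (s : store), diverges c s <-> bigdiv c s.
Proof. intros c s; split; [apply small_big|apply big_small]. Qed.
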